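(* Let $R$ be a (unital, not necessarily associative) ring and let $\sigma\colon R\to R$ be an additive bijection with $\sigma(1)=1$. Let $S=R[X^{\pm};\sigma]$ and let $T=R[X;\sigma,0]\subseteq S$. If $I$ is a left ideal of $S$, then $I=S(I\cap T)$. If $I$ is a right ideal of $S$, then $I=(I\cap T)S$.
   Context: A left (right) ideal of a non-associative ring $S$ is an additive subgroup $I$ with $sI\subseteq I$ ($Is\subseteq I$) for all $s\in S$. $S=R[X^{\pm};\sigma]$ is the additive group of formal sums $\sum_{i\in\mathbb{Z}} r_iX^i$ ($r_i\in R$, finitely many non-zero) with pointwise addition and multiplication the biadditive extension of $(rX^m)(sX^n)=(r\sigma^m(s))X^{m+n}$ for $r,s\in R$, $m,n\in\mathbb{Z}$. $T=R[X;\sigma,0]$ is the subset of $S$ of elements with $r_i=0$ for all $i<0$ (with the same multiplication, i.e. the non-associative Ore extension with $\delta=0$). For subsets $A,B\subseteq S$, $AB$ denotes the set of finite sums $\sum a_kb_k$ with $a_k\in A$, $b_k\in B$. *)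

(* Defs.v *)
From HB Require Import structures.
From mathcomp Require Import all_boot all_order all_algebra.
From mathcomp Require Import finmap.
Set Implicit Arguments. Unset Strict Implicit. Unset Printing Implicit Defensive.
Import Order.TTheory GRing.Theory Num.Theory.
Local Open Scope fset_scope.
Local Open Scope ring_scope.

Definition nonassoc_unital_ring (R : zmodType) (mul : R -> R -> R) (one : R) :=
  [/\ forall x y z, mul (x + y) z = mul x z + mul y z,
      forall x y z, mul x (y + z) = mul x y + mul x z,
      forall x, mul one x = x
    & forall x, mul x one = x].

Definition sigpow (R : Type) (sigma sigmainv : R -> R) (m : int) : R -> R :=
  match m with
  | Posz n => iter n sigma
  | Negz n => iter n.+1 sigmainv
  end.

(* The additive group of R[X^{+-};sigma]: finitely supported maps int -> R,
   the coefficient at i being r_i. *)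
Definition Laurent (R : zmodType) := {fsfun int -> R with 0}.

Definition Ladd (R : zmodType) (f g : Laurent R) : Laurent R :=
  [fsfun k in (finsupp f `|` finsupp g)%fset => f k + g k | 0].

Definition Lzero (R : zmodType) : Laurent R := [fsfun for fun _ => 0 : R].

(* (sum_i f_i X^i)(sum_j g_j X^j) = sum_k (sum_{i+j=k} f_i sigma^i(g_j)) X^k *)
Definition Lmul (R : zmodType) (mul : R -> R -> R) (sigma sigmainv : R -> R)
  (f g : Laurent R) : Laurent R :=
  [fsfun k in [fset (i + j)%R | i in finsupp f, j in finsupp g]%fset =>
     \sum_(i <- finsupp f) mul (f i) (sigpow sigma sigmainv i (g (k - i)%R)) | 0].

(* T = R[X;sigma,0]: elements with r_i = 0 for all i < 0 *)
Definition inT (R : zmodType) (f : Laurent R) : Prop :=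
  forall i : int, (i < 0)%R -> f i = 0.

Definition Lopp (R : zmodType) (f : Laurent R) : Laurent R :=
  [fsfun k in finsupp f => - f k | 0].

Definition add_subgroup (R : zmodType) (I : Laurent R -> Prop) : Prop :=
  [/\ I (Lzero R),
      forall x y, I x -> I y -> I (Ladd x y)
    & forall x, I x -> I (Lopp x)].

Definition left_ideal (R : zmodType) (mul : R -> R -> R) (sigma sigmainv : R -> R)
  (I : Laurent R -> Prop) : Prop :=
  add_subgroup I /\ forall s x, I x -> I (Lmul mul sigma sigmainv s x).

Definition right_ideal (R : zmodType) (mul : R -> R -> R) (sigma sigmainv : R -> R)
  (I : Laurent R -> Prop) : Prop :=
  add_subgroup I /\ forall s x, I x -> I (Lmul mul sigma sigmainv x s).

Definition Lsetmul (R : zmodType) (mul : R -> R -> R) (sigma sigmainv : R -> R)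
  (A B : Laurent R -> Prop) : Laurent R -> Prop :=
  fun x => exists s : seq (Laurent R * Laurent R),
    (forall p, p \in s -> A p.1 /\ B p.2) /\
    x = foldr (fun p acc => Ladd (Lmul mul sigma sigmainv p.1 p.2) acc) (Lzero R) s.

(* Main.v *)
Require Import Defs.
From HB Require Import structures.
From mathcomp Require Import all_boot all_order all_algebra.
From mathcomp Require Import finmap.
From mathcomp Require Import zify.
Set Implicit Arguments. Unset Strict Implicit.
Import GRing.Theory.
Local Open Scope ring_scope.

Definition mono (R : zmodType) (a : int) (r : R) : Laurent R :=
  [fsfun k in [fset a]%fset => r | 0].

Lemma monoE (R : zmodType) (a : int) (r : R) (k : int) : mono a r k = if k == a then r else 0.
Proof. by rewrite /mono fsfunE in_fset1. Qed.

Lemma mul0l_ (R : zmodType) (mul : R -> R -> R) :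
  (forall x y z, mul (x + y) z = mul x z + mul y z) -> forall x, mul 0 x = 0.
Proof. move=> H x; apply: (@addrI _ (mul 0 x)); by rewrite -H !addr0. Qed.

Lemma mul0r_ (R : zmodType) (mul : R -> R -> R) :
  (forall x y z, mul x (y + z) = mul x y + mul x z) -> forall x, mul x 0 = 0.
Proof. move=> H x; apply: (@addrI _ (mul x 0)); by rewrite -H !addr0. Qed.

Lemma sigpow0 (R : zmodType) (sigma sigmainv : R -> R) :
  {morph sigma : x y / x + y} -> cancel sigma sigmainv ->
  forall i, sigpow sigma sigmainv i 0 = 0.
Proof.
move=> Hm Hc.
have s0 : sigma 0 = 0 by apply: (@addrI _ (sigma 0)); rewrite -Hm !addr0.
have si0 : sigmainv 0 = 0 by rewrite -{1}s0 Hc.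
have h1 m : iter m sigma 0 = 0 by elim: m => //= m ->.
have h2 m : iter m sigmainv 0 = 0 by elim: m => //= m ->.
by case=> n; [exact: h1 | exact: (h2 n.+1)].
Qed.

Lemma sigpow1 (R : zmodType) (sigma sigmainv : R -> R) one :
  cancel sigma sigmainv -> sigma one = one ->
  forall i, sigpow sigma sigmainv i one = one.
Proof.
move=> Hc s1.
have si1 : sigmainv one = one by rewrite -{1}s1 Hc.
have h1 m : iter m sigma one = one by elim: m => //= m ->.
have h2 m : iter m sigmainv one = one by elim: m => //= m ->.
by case=> n; [exact: h1 | exact: (h2 n.+1)].
Qed.

Lemma sum_single (R : zmodType) (s : seq int) (F : int -> R) c :
  uniq s -> (forall i, i \in s -> i != c -> F i = 0) -> (c \notin s -> F c = 0) ->
  \sum_(i <- s) F i = F c.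
Proof.
move=> us H1 H2; case: (boolP (c \in s)) => cs.
  rewrite (bigD1_seq c) //= big1_seq ?addr0 // => i /andP[? ?]; exact: H1.
rewrite H2 // big1_seq // => i /andP[_ iS]; apply: H1 => //.
by apply/eqP => ic; move: cs; rewrite -ic iS.
Qed.

Lemma LmulE (R : zmodType) (mul : R -> R -> R) (sigma sigmainv : R -> R) f g k :
  (forall x, mul x 0 = 0) -> (forall i, sigpow sigma sigmainv i 0 = 0) ->
  Lmul mul sigma sigmainv f g k =
  \sum_(i <- finsupp f) mul (f i) (sigpow sigma sigmainv i (g (k - i))).
Proof.
move=> m0 s0; rewrite /Lmul fsfunE; case: ifP => // kn.
symmetry; rewrite big1_seq // => i /andP[_ fi].
case: (boolP (k - i \in finsupp g)) => gi.
  case/negP: (negbT kn); apply/imfset2P; exists i => //; exists (k - i) => //.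
  by rewrite addrC subrK.
by move: gi; rewrite memNfinsupp => /eqP ->; rewrite s0 m0.
Qed.

Lemma Ladd0 (R : zmodType) (y : Laurent R) : Ladd y (Lzero R) = y.
Proof.
apply/fsfunP => k; rewrite /Ladd fsfunE /Lzero fsfunE addr0.
by case: ifP => // /negbT; rewrite in_fsetU negb_or => /andP[]; rewrite memNfinsupp => /eqP.
Qed.

Lemma mul_mono_l (R : zmodType) (mul : R -> R -> R) one (sigma sigmainv : R -> R) a f k :
  (forall x, mul 0 x = 0) -> (forall x, mul x 0 = 0) -> (forall x, mul one x = x) ->
  (forall i, sigpow sigma sigmainv i 0 = 0) ->
  Lmul mul sigma sigmainv (mono a one) f k = sigpow sigma sigmainv a (f (k - a)).
Proof.
move=> m0l m0r m1 s0; rewrite LmulE // (@sum_single _ _ _ a) ?fset_uniq //.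
- by rewrite monoE eqxx m1.
- by move=> i _ /negPf ia; rewrite monoE ia m0l.
- by rewrite memNfinsupp monoE eqxx => /eqP ->; rewrite m0l.
Qed.

Lemma mul_mono_r (R : zmodType) (mul : R -> R -> R) one (sigma sigmainv : R -> R) a f k :
  (forall x, mul 0 x = 0) -> (forall x, mul x 0 = 0) -> (forall x, mul x one = x) ->
  (forall i, sigpow sigma sigmainv i 0 = 0) ->
  (forall i, sigpow sigma sigmainv i one = one) ->
  Lmul mul sigma sigmainv f (mono a one) k = f (k - a).
Proof.
move=> m0l m0r m1 s0 s1; rewrite LmulE // (@sum_single _ _ _ (k - a)) ?fset_uniq //.
- by rewrite subKr monoE eqxx s1 m1.
- move=> i _ ia; rewrite monoE; case: eqP => [e|]; last by rewrite s0 m0r.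
  by case/eqP: ia; rewrite -e subKr.
- by rewrite memNfinsupp => /eqP ->; rewrite m0l.
Qed.

Lemma lower_bound (R : zmodType) (x : Laurent R) :
  exists N : nat, forall i, x i != 0 -> - (N%:Z) <= i.
Proof.
have gen (s : seq int) : exists N : nat, forall i, i \in s -> - (N%:Z) <= i.
  elim: s => [|a s [N HN]]; first by exists 0%N.
  exists (maxn N `|a|%N) => i; rewrite inE => /orP[/eqP ->|/HN].
  - lia.
  - lia.
have [N HN] := gen (finsupp x); exists N => i xi; apply: HN; by rewrite mem_finsupp.
Qed.

Lemma iterK (R : Type) (f g : R -> R) : cancel f g -> forall n v, iter n g (iter n f v) = v.
Proof. move=> c; elim=> // n IH v; by rewrite iterSr iterS c IH. Qed.

Lemma setmul_closed (R : zmodType) (mul : R -> R -> R) (sigma sigmainv : R -> R)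
  (A B I : Laurent R -> Prop) x :
  add_subgroup I -> (forall a b, A a -> B b -> I (Lmul mul sigma sigmainv a b)) ->
  Lsetmul mul sigma sigmainv A B x -> I x.
Proof.
move=> [I0 IA _] Hab [s [Hs ->]]; elim: s Hs => //= p s IH Hs.
apply: IA; last by apply: IH => q qs; apply: Hs; rewrite inE qs orbT.
by have [] := Hs p (mem_head _ _); apply: Hab.
Qed.

Theorem proposition17 (R : zmodType) (mul : R -> R -> R) (one : R)
  (sigma sigmainv : R -> R) :
  nonassoc_unital_ring mul one ->
  {morph sigma : x y / x + y} ->
  cancel sigma sigmainv -> cancel sigmainv sigma ->
  sigma one = one ->
  (forall I : Laurent R -> Prop, left_ideal mul sigma sigmainv I ->
     forall x, I x <->
       Lsetmul mul sigma sigmainv (fun _ => True) (fun y => I y /\ inT y) x) /\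
  (forall I : Laurent R -> Prop, right_ideal mul sigma sigmainv I ->
     forall x, I x <->
       Lsetmul mul sigma sigmainv (fun y => I y /\ inT y) (fun _ => True) x).
Proof.
move=> [mDl mDr m1l m1r] sM sK sK' s1.
have m0l := mul0l_ mDl; have m0r := mul0r_ mDr.
have s0 := sigpow0 sM sK; have sp1 := sigpow1 sK s1.
have shift (n : nat) (k : int) : k - Negz n - Posz n.+1 = k.
  rewrite NegzE opprK; lia.
split=> I [Isub Imul] x; split.
- move=> Ix; have [n Hn] := lower_bound x.
  pose y := Lmul mul sigma sigmainv (mono (Posz n.+1) one) x.
  exists [:: (mono (Negz n) one, y)]; split.
    move=> p; rewrite inE => /eqP -> /=; split => //; split; first exact: Imul.
    move=> i i0; rewrite /y mul_mono_l //.
    have -> : x (i - n.+1%:Z) = 0; last exact: s0.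
    apply/eqP; apply: contraT => /Hn; lia.
  rewrite /= Ladd0; apply/fsfunP => k; rewrite /y !mul_mono_l // shift /=.

  by rewrite -[RHS]/(iter n.+1 sigmainv (iter n.+1 sigma (x k))) iterK.
- move=> H; apply: (setmul_closed Isub _ H) => a b _ [Ib _]; exact: Imul.
- move=> Ix; have [n Hn] := lower_bound x.
  pose y := Lmul mul sigma sigmainv x (mono (Posz n.+1) one).
  exists [:: (y, mono (Negz n) one)]; split.
    move=> p; rewrite inE => /eqP -> /=; split => //; split; first exact: Imul.
    move=> i i0; rewrite /y mul_mono_r //.
    apply/eqP; apply: contraT => /Hn; lia.
  rewrite /= Ladd0; apply/fsfunP => k; rewrite /y !mul_mono_r //.
  by rewrite shift.
- move=> H; apply: (setmul_closed Isub _ H) => a b [Ia _] _; exact: Imul.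
Qed.
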